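(* Let $C_{(\mathcal T,\Psi_{\mathcal T})}$ be a nested Archimedean copula with regularly varying generators $\psi_v$ of index $-\alpha_v$, $\alpha_v>0$, $v\in\mathcal I$, and for $v\in\mathcal V$ let $\Lambda_v$ denote the tail copula of $C_v$, given recursively by $\Lambda_v(\bm x_{\mathrm{le}(v)})=x_v$ for $v\in\mathcal L$ and $\Lambda_v(\bm x_{\mathrm{le}(v)})=\left(\sum_{w\in\mathrm{ch}(v)}\Lambda_w(\bm x_{\mathrm{le}(w)})^{-1/\alpha_v}\right)^{-\alpha_v}$ for $v\in\mathcal I$. For $v\in\mathcal I$ let $\lambda^\ast(\Lambda_v)=\sup\{\Lambda_v(\bm b):\bm b\in(0,\infty)^{d(v)},\ \prod_{i\in\mathrm{le}(v)}b_i=1\}$ denote the MTCM of $C_v$. Empty products equal $1$. Then: (i) Recursively define $\lambda_v^\ast=1$ for $v\in\mathcal L$ and $$\lambda_v^\ast=d(v)^{-\alpha_v}\prod_{w\in\mathrm{ch}(v)}\left\{d(w)^{\alpha_v}\lambda_w^\ast\right\}^{d(w)/d(v)},\quad v\in\mathcal I.$$ Then $\lambda^\ast(\Lambda_v)=\lambda_v^\ast$ for all $v\in\mathcal I$. (ii) For all $v\in\mathcal I$, $$\lambda_v^\ast=d(v)^{-\alpha_v}\prod_{w\in\mathcal I_v\setminus\{v\}}d(w)^{(\alpha_{\mathrm{pa}(w)}-\alpha_w)d(w)/d(v)}.$$ (iii) For all $v\in\mathcal I$, the maximizer $\bm b_v^\ast$ of $\Lambda_v$ over $\{\bm b\in(0,\infty)^{d(v)}:\prod_{i\in\mathrm{le}(v)}b_i=1\}$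 is unique and, for each leaf $j\in\mathrm{le}(v)$, $$(\bm b_v^\ast)_j=\lambda_v^\ast\,d(v)^{\alpha_v}\prod_{w\in\mathrm{an}_v(j)}d(w)^{\alpha_w-\alpha_{\mathrm{pa}(w)}}.$$
   Context: An Archimedean generator is a continuous, decreasing $\psi:[0,\infty)\to[0,1]$ with $\psi(0)=1$, $\lim_{t\to\infty}\psi(t)=0$, strictly decreasing on $[0,\inf\{t:\psi(t)=0\}]$, with inverse $\psi^{-1}$; $\Psi_\infty$ is the set of completely monotone ones. $f:(0,\infty)\to(0,\infty)$ is regularly varying with index $\rho$ if $\lim_{x\to\infty}f(tx)/f(x)=t^\rho$ for all $t>0$. Let $\mathcal T=(\mathcal V,\mathcal E)$ be a rooted tree with root $r$, leaves $\mathcal L=\{1,\dots,d\}$, internal vertices $\mathcal I=\mathcal V\setminus\mathcal L$; $\mathrm{pa}(v)$ is the parent, $\mathrm{ch}(v)$ the children, $\mathrm{le}(v)$ the leaves of the subtree rooted at $v$ ($\mathrm{le}(v)=\{v\}$ for leaves), $d(v)=|\mathrm{le}(v)|$. For $v\in\mathcal V$, $\mathcal I_v$ denotes the set of internal vertices of the subtree $\mathcal T_v$ rooted at $v$, and for $w$ in $\mathcal T_v$, $\mathrm{an}_v(w)$ is the (possibly empty) set of ancestors of $w$ in $\mathcal T_v$, excluding the root $v$ (and excluding $w$ itself). Given $\{\psi_v\}_{v\in\mathcal I}\subseteq\Psi_\infty$, recursively set $C_v(\bm u_{\mathrm{le}(v)})=u_v$ for $v\in\mathcal L$ and $C_v(\bm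 u_{\mathrm{le}(v)})=\psi_v\left(\sum_{w\in\mathrm{ch}(v)}\psi_v^{-1}(C_w(\bm u_{\mathrm{le}(w)}))\right)$ for $v\in\mathcal I$; the nested Archimedean copula is $C_r$. The sufficient nesting condition is assumed: $(\psi_{\mathrm{pa}(v)}^{-1}\circ\psi_v)'$ is completely monotone for every $v\in\mathcal I\setminus\{r\}$. Regularly varying generators means each $\psi_v$ is regularly varying with index $-\alpha_v$, $\alpha_v>0$. The tail copula of a copula $C$ is $\Lambda(\bm x;C)=\lim_{t\downarrow0}C(t\bm x)/t$. *)

(* Defs.v *)
From HB Require Import structures.
From mathcomp Require Import all_boot all_order all_algebra.
From mathcomp Require Import all_classical all_reals all_analysis.
Set Implicit Arguments. Unset Strict Implicit. Unset Printing Implicit Defensive.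
Import Order.TTheory GRing.Theory Num.Theory.
Local Open Scope ring_scope.
Local Open Scope classical_set_scope.

Section Tree.
Variables (V : finType) (r : V) (pa : V -> V).

(* A rooted tree on the finite vertex set V, given by its root r and its
   parent map pa (with the convention pa r = r): every vertex reaches the
   root by iterating pa. *)
Definition is_rooted_tree : Prop :=
  pa r = r /\ forall v : V, exists k : nat, iter k pa v = r.

Definition ch (v : V) : {set V} := [set w | (w != r) && (pa w == v)].
Definition leaf (v : V) : bool := #|ch v| == 0%N.
Definition internal (v : V) : bool := ~~ leaf v.
(* desc v w : w lies in the subtree T_v rooted at v (v is w or an ancestor
   of w); paths have length < #|V| *)
Definition desc (v w : V) : bool := [exists k : 'I_#|V|, iter k pa w == v].
Definition leaves (v : V) : {set V} := [set w | leaf w && desc v w].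
Definition Iv (v : V) : {set V} := [set w | internal w && desc v w].
(* an_v(j): ancestors of j in T_v, excluding the root v and j itself *)
Definition anc (v j : V) : {set V} :=
  [set w | [&& desc v w, desc w j, w != v & w != j]].


End Tree.

Definition dd (R : realType) (V : finType) (r : V) (pa : V -> V) (v : V) : R :=
  (#|leaves r pa v|)%:R.

(* The constraint set {b in (0,oo)^V : prod_{i in le(v)} b_i = 1}; vectors are
   indexed by the vertices, only the coordinates in le(v) matter. *)
Definition Sv (R : realType) (V : finType) (r : V) (pa : V -> V) (v : V)
  : set (V -> R) :=
  [set b | (forall i, 0 < b i) /\ \prod_(i in leaves r pa v) b i = 1].
Arguments Sv R {V} r pa v _.

(* Main.v *)
Require Import Defs.
From HB Require Import structures.
From mathcomp Require Import all_boot all_order all_algebra.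
From mathcomp Require Import all_classical all_reals all_analysis.
From mathcomp Require Import ring lra.
Import Order.TTheory GRing.Theory Num.Theory.
Local Open Scope ring_scope.

Section TreeLemmas.
Context {V : finType} {r : V} {pa : V -> V}.
Hypothesis tree : is_rooted_tree r pa.


Lemma iter_r k : iter k pa r = r.
Proof. case: tree => pr _; elim: k => //= k ->; exact pr. Qed.

Lemma cycle_r {u m} : iter m.+1 pa u = u -> u = r.
Proof.
move=> h; case: tree => pr /(_ u) [K hK].
have hi : forall i, iter (m.+1 * i) pa u = u.
  elim=> [|i IH]; first by rewrite muln0.
  by rewrite mulnS iterD IH.
have le : (K <= m.+1 * K)%N by rewrite leq_pmull.
by rewrite -(hi K) -(subnK le) iterD hK iter_r.
Qed.

Lemma descP v w : reflect (exists k, iter k pa w = v) (desc pa v w).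
Proof.
apply: (iffP idP).
  by case/existsP => k /eqP h; exists k.
case=> k hk.
have exT : exists n, iter n pa w == r.
  by case: tree => _ /(_ w) [K hK]; exists K; apply/eqP.
case: (ex_minnP exT) => T /eqP hT minT.
have noeq : forall i j, (i < j)%N -> (j <= T)%N -> iter i pa w = iter j pa w -> False.
  move=> i j ij jT e.
  have : iter (j - i) pa (iter i pa w) = iter i pa w.
    by rewrite -iterD (subnK (ltnW ij)) -e.
  case e2: (j - i)%N => [|m]; first by move: ij; rewrite -subn_gt0 e2.
  move=> /cycle_r h.
  have := minT i (introT eqP h). by rewrite leqNgt (leq_trans ij jT).
have TV : (T < #|V|)%N.
  pose f := fun i : 'I_T.+1 => iter i pa w.
  have finj : injective f.
    move=> i j e; apply/val_inj; apply/eqP; rewrite eqn_leq.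
    have iT := ltn_ord i; have jT := ltn_ord j.
    rewrite (leqNgt i j) (leqNgt j i); apply/andP; split; apply/negP => lt.
      exact: (noeq j i lt iT (esym e)).
    exact: (noeq i j lt jT e).
  by have := leq_card f finj; rewrite card_ord.
apply/existsP.
case: (leqP k T) => kT.
  by exists (Ordinal (leq_ltn_trans kT TV)); rewrite /= hk.
exists (Ordinal TV) => /=.
by rewrite -hk -(subnK (ltnW kT)) iterD hT iter_r.
Qed.

Lemma desc_refl v : desc pa v v.
Proof. by apply/descP; exists 0%N. Qed.

Lemma desc_trans {u v w} : desc pa u v -> desc pa v w -> desc pa u w.
Proof.
move=> /descP [a ha] /descP [b hb]; apply/descP; exists (a + b)%N.
by rewrite iterD hb ha.
Qed.

Lemma desc_pa v : desc pa (pa v) v.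
Proof. by apply/descP; exists 1%N. Qed.

Lemma desc_antisym {v w} : desc pa v w -> desc pa w v -> v = w.
Proof.
move=> /descP [a ha] /descP [b hb].
have e : iter (a + b) pa v = v by rewrite iterD hb.
case ab: (a + b)%N e => [|m] e.
  by move: ab => /eqP; rewrite addn_eq0 => /andP [/eqP a0 /eqP b0]; move: hb; rewrite b0.
have vr := cycle_r e.
by rewrite -hb vr iter_r.
Qed.

Lemma ch_pa {k v} : k \in ch r pa v -> pa k = v /\ k != r.
Proof. by rewrite inE => /andP [kr /eqP pk]. Qed.

Lemma ch_neq {k v} : k \in ch r pa v -> k != v.
Proof.
move=> /ch_pa [pk kr]; apply/eqP => e; move: pk; rewrite e => pv.
have : iter 1 pa v = v by [].
move/cycle_r => vr; move: kr; by rewrite e vr eqxx.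
Qed.

Lemma desc_ch {k v u} : k \in ch r pa v -> desc pa k u -> desc pa v u.
Proof. move=> /ch_pa [pk _]; rewrite -pk; apply: desc_trans; exact: desc_pa. Qed.

Lemma desc_ch_neq {k v u} : k \in ch r pa v -> desc pa k u -> u != v.
Proof.
move=> kc dku; apply/eqP => e; move: dku; rewrite e => dkv.
have := desc_ch kc (desc_refl k) => dvk.
by have := ch_neq kc; rewrite (desc_antisym dkv dvk) eqxx.
Qed.

Lemma child_step {v u} : desc pa v u -> u != v -> exists2 k, k \in ch r pa v & desc pa k u.
Proof.
move=> /descP [k]; elim: k u => [|k IH] u /=.
  by move=> ->; rewrite eqxx.
move=> e uv.
case cv: (iter k pa u == v).
  move/eqP: cv => cv.
  case: k IH e cv => [|k] IH e cv; first by move: uv; rewrite -cv /= eqxx.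
  exact: IH cv uv.
exists (iter k pa u).
  rewrite inE e eqxx andbT; apply/eqP => cr.
  by move: cv; rewrite -e cr; case: tree => -> _; rewrite eqxx.
by apply/descP; exists k.
Qed.

Lemma child_uniq {v k1 k2 u} : k1 \in ch r pa v -> k2 \in ch r pa v ->
  desc pa k1 u -> desc pa k2 u -> k1 = k2.
Proof.
move=> c1 c2 /descP [a ha] /descP [b hb].
wlog ab : k1 k2 a b c1 c2 ha hb / (a <= b)%N.
  move=> H; case: (leqP a b) => ab; first exact: (H k1 k2 a b).
  by apply/esym/(H k2 k1 b a) => //; apply: ltnW.
have e : iter (b - a) pa k1 = k2 by rewrite -ha -iterD subnK.
case ba : (b - a)%N e => [|m] e; first by rewrite -e.
move: e; rewrite iterSr; case: (ch_pa c1) => -> _ e.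
have d1 : desc pa k2 v by apply/descP; exists m.
have d2 : desc pa v k2 by case: (ch_pa c2) => <- _; exact: desc_pa.
by have := ch_neq c2; rewrite (desc_antisym d1 d2) eqxx.
Qed.

Lemma leaf_noch v : leaf r pa v -> ch r pa v = finset.set0.
Proof. by move=> /eqP /cards0_eq. Qed.

Lemma leaf_desc {v u} : leaf r pa v -> desc pa v u -> u = v.
Proof.
move=> lv dvu; apply/eqP; apply/negP => /negP uv.
have [k kc _] := child_step dvu uv.
by move: kc; rewrite leaf_noch // inE.
Qed.

Lemma internal_ch {v} : internal r pa v -> ch r pa v != finset.set0.
Proof. by apply: contra => /eqP e; rewrite /leaf e cards0. Qed.

Lemma tree_ind (P : V -> Prop) :
  (forall v, (forall k, k \in ch r pa v -> P k) -> P v) -> forall v, P v.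
Proof.
move=> IH v.
move: {2}(#|[set u | desc pa v u]|.+1) (ltnSn #|[set u | desc pa v u]|) => n.
elim: n v => // n IHn v lt; apply: IH => k kc; apply: IHn.
rewrite -ltnS; apply: leq_trans lt; apply: proper_card.
apply/properP; split.
  by apply/fintype.subsetP => u; rewrite !inE; apply: desc_ch.
exists v; rewrite !inE ?desc_refl //.
by apply/negP => dkv; have := desc_ch_neq kc dkv; rewrite eqxx.
Qed.

Lemma sum_part (R : nmodType) (Q : pred V) (f : V -> R) v :
  \sum_(u | Q u && desc pa v u && (u != v)) f u =
  \sum_(k in ch r pa v) \sum_(u | Q u && desc pa k u) f u.
Proof.
transitivity (\sum_(k in ch r pa v) \sum_(u | Q u && desc pa v u && (u != v))
                 (if desc pa k u then f u else 0)); last first.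
  apply: eq_bigr => k kc; rewrite -big_mkcondr /=; apply: eq_bigl => u.
  case: (boolP (desc pa k u)) => h; rewrite ?andbF ?andbT //.
  by rewrite (desc_ch kc h) (desc_ch_neq kc h) !andbT.
rewrite exchange_big /=; apply: eq_bigr => u /andP [/andP [qu dvu] nuv].
rewrite -big_mkcondr /=.
have [k kc dku] := child_step dvu nuv.
rewrite (big_pred1 k) // => k' /=.
apply/andP/eqP => [[k'c dk'u] | ->]; last by [].
exact: child_uniq k'c kc dk'u dku.
Qed.

Lemma le_leaf v : leaf r pa v -> leaves r pa v = [set v].
Proof.
move=> lv; apply/setP => u; rewrite !inE; apply/andP/eqP => [[_ d] | ->].
  exact: leaf_desc d.
by rewrite lv desc_refl.
Qed.

Lemma sum_le_int (R : nmodType) (f : V -> R) v : internal r pa v ->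
  \sum_(j in leaves r pa v) f j = \sum_(k in ch r pa v) \sum_(j in leaves r pa k) f j.
Proof.
move=> iv.
transitivity (\sum_(k in ch r pa v) \sum_(u | leaf r pa u && desc pa k u) f u); last first.
  by apply: eq_bigr => k _; apply: eq_bigl => u; rewrite inE.
rewrite -sum_part; apply: eq_bigl => u; rewrite inE.
case: (boolP (leaf r pa u)) => //= lu.
case: (boolP (desc pa v u)) => //= _.
by apply/esym/negP => /eqP e; move: iv; rewrite /internal -e lu.
Qed.

Lemma sum_Iv (R : nmodType) (f : V -> R) v :
  \sum_(u in Iv r pa v :\ v) f u = \sum_(k in ch r pa v) \sum_(u in Iv r pa k) f u.
Proof.
transitivity (\sum_(k in ch r pa v) \sum_(u | internal r pa u && desc pa k u) f u); last first.
  by apply: eq_bigr => k _; apply: eq_bigl => u; rewrite inE.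
rewrite -sum_part; apply: eq_bigl => u; rewrite !inE.
by rewrite andbC.
Qed.

Lemma Iv_leaf v : leaf r pa v -> Iv r pa v = finset.set0.
Proof.
move=> lv; apply/setP => u; rewrite !inE; apply/negP => /andP [iu d].
by move: iu; rewrite (leaf_desc lv d) /internal lv.
Qed.

Lemma Iv_in v : internal r pa v -> v \in Iv r pa v.
Proof. by move=> iv; rewrite inE iv desc_refl. Qed.

Lemma anc_self v : anc pa v v = finset.set0.
Proof.
apply/setP => w; rewrite !inE; apply/negP => /and4P [d1 d2 n1 _].
by move: n1; rewrite (desc_antisym d1 d2) eqxx.
Qed.

Lemma anc_int {v k j} : k \in ch r pa v -> internal r pa k -> j \in leaves r pa k ->
  anc pa v j = k |: anc pa k j.
Proof.
move=> kc ik; rewrite inE => /andP [lj dkj].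
apply/setP => w; rewrite !inE.
apply/idP/idP.
  case/and4P => dvw dwj wv wj.
  have [c cc dcw] := child_step dvw wv.
  have ck : c = k by apply: (child_uniq cc kc (desc_trans dcw dwj) dkj).
  subst c; case: (eqVneq w k) => //= _.
  by rewrite dcw dwj wj andbT /=; apply/negP.
case/orP => [/eqP -> | /and4P [dkw dwj wk wj]].
  rewrite (desc_ch kc (desc_refl k)) dkj ch_neq //=.
  by apply/eqP => e; move: ik; rewrite /internal e lj.
by rewrite (desc_ch kc dkw) dwj wj (desc_ch_neq kc dkw).
Qed.

Lemma anc_leaf {v k j} : k \in ch r pa v -> leaf r pa k -> j \in leaves r pa k ->
  j = k /\ anc pa v j = finset.set0.
Proof.
move=> kc lk; rewrite inE => /andP [lj dkj].
have jk := leaf_desc lk dkj; subst j; split => //.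
apply/setP => w; rewrite !inE; apply/negP => /and4P [dvw dwk wv wk].
have [c cc dcw] := child_step dvw wv.
have ck : c = k by apply: (child_uniq cc kc (desc_trans dcw dwk) (desc_refl k)).
subst c; by move: wk; rewrite (desc_antisym dwk dcw) eqxx.
Qed.

Lemma leaves_nonempty v : exists j, j \in leaves r pa v.
Proof.
elim/tree_ind: v => v IH.
case: (boolP (leaf r pa v)) => lv.
  by exists v; rewrite le_leaf // inE.
have /finset.set0Pn [k kc] := internal_ch lv.
have [j jl] := IH k kc; exists j.
move: jl; rewrite !inE => /andP [-> d] /=; exact: desc_ch kc d.
Qed.

End TreeLemmas.

Section Real.
Variable R : realType.

Lemma powR_exp (x y : R) : 0 < x -> x `^ y = expR (y * ln x).
Proof. by move=> x0; rewrite /powR gt_eqF. Qed.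

Lemma ln_prod (I : finType) (P : pred I) (F : I -> R) :
  (forall i, P i -> 0 < F i) -> ln (\prod_(i | P i) F i) = \sum_(i | P i) ln (F i).
Proof.
move=> Fp.
pose K (a b : R) := 0 < a /\ ln a = b.
suff : K (\prod_(i | P i) F i) (\sum_(i | P i) ln (F i)) by case.
apply: (big_rec2 K); first by split; [exact: ltr01 | exact: ln1].
move=> i a b Pi [a0 <-]; split; first by rewrite mulr_gt0 // Fp.
by rewrite lnM // posrE // Fp.
Qed.

Lemma prod_gt0 (I : finType) (P : pred I) (F : I -> R) :
  (forall i, P i -> 0 < F i) -> 0 < \prod_(i | P i) F i.
Proof. by move=> Fp; apply: prodr_gt0. Qed.

Lemma psum_gt0 (I : finType) (A : {set I}) (F : I -> R) :
  A != finset.set0 -> (forall i, i \in A -> 0 < F i) -> 0 < \sum_(i in A) F i.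
Proof.
case/finset.set0Pn => k kA Fp; rewrite (bigD1 k) //=.
apply: (lt_le_trans (Fp k kA)); rewrite lerDl; apply: sumr_ge0 => i /andP [iA _].
exact/ltW/Fp.
Qed.

Lemma ln_le_sub1 (y : R) : 0 < y -> ln y <= y - 1.
Proof.
move=> y0; have := expR_ge1Dx (ln y); rewrite lnK ?posrE //; lra.
Qed.

Lemma ln_eq_sub1 (y : R) : 0 < y -> ln y = y - 1 -> y = 1.
Proof.
move=> y0 e; case: (eqVneq (ln y) 0) => h.
  by apply/eqP; rewrite -ln_eq0 // h.
have := expR_gt1Dx h; rewrite lnK ?posrE //; lra.
Qed.

Lemma amgm {I : finType} {A : {set I}} {p x : I -> R} :
  (forall k, k \in A -> 0 < p k) -> \sum_(k in A) p k = 1 ->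
  (forall k, k \in A -> 0 < x k) ->
  \sum_(k in A) p k * ln (x k) <= ln (\sum_(k in A) p k * x k) /\
  (\sum_(k in A) p k * ln (x k) = ln (\sum_(k in A) p k * x k) ->
     forall k, k \in A -> x k = \sum_(k in A) p k * x k).
Proof.
move=> pp p1 xp; set M := \sum_(k in A) p k * x k.
have An : A != finset.set0.
  by apply/eqP => A0; move: p1; rewrite A0 big_set0 => /eqP; rewrite eq_sym oner_eq0.
have M0 : 0 < M by apply: psum_gt0 => // k kA; rewrite mulr_gt0 ?pp ?xp.
pose e k := p k * ((x k / M - 1) - ln (x k / M)).
have e0 : forall k, k \in A -> 0 <= e k.
  move=> k kA; apply: mulr_ge0; first exact/ltW/pp.
  by rewrite subr_ge0 ln_le_sub1 // divr_gt0 ?xp.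
have esum : \sum_(k in A) e k = ln M - \sum_(k in A) p k * ln (x k).
  transitivity (\sum_(k in A) (p k * x k / M - p k + p k * ln M - p k * ln (x k))).
    apply: eq_bigr => k kA; rewrite /e ln_div ?posrE ?xp //; ring.
  rewrite sumrB big_split sumrB /= -!mulr_suml -/M p1 mulfV ?gt_eqF //; ring.
split.
  by rewrite -subr_ge0 -esum; exact: sumr_ge0.
move=> eq k kA.
have : e k = 0.
  by apply: (psumr_eq0P e0) => //; rewrite esum eq subrr.
rewrite /e => /eqP; rewrite mulf_eq0 gt_eqF ?pp //= subr_eq0 => /eqP h.
have h1 := ln_eq_sub1 _ (divr_gt0 (xp k kA) M0) (esym h).
by move: h1 => /(congr1 (fun t => t * M)); rewrite mul1r divfK ?gt_eqF.
Qed.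


Lemma step (I : finType) (A : {set I}) (n l m : I -> R) (a : R) :
  0 < a -> A != finset.set0 -> (forall k, k \in A -> 0 < n k) ->
  (forall k, k \in A -> l k <= m k) ->
  - a * ln (\sum_(k in A) expR (- a^-1 * l k)) <=
    - a * ln (\sum_(k in A) n k) +
    \sum_(k in A) (n k / \sum_(k in A) n k) * (m k + a * ln (n k)) /\
  (- a * ln (\sum_(k in A) expR (- a^-1 * l k)) =
    - a * ln (\sum_(k in A) n k) +
    \sum_(k in A) (n k / \sum_(k in A) n k) * (m k + a * ln (n k)) ->
   forall k, k \in A -> l k = m k /\
     m k + a * ln (n k) = - a * ln (\sum_(k in A) n k) +
    \sum_(k in A) (n k / \sum_(k in A) n k) * (m k + a * ln (n k)) + a * ln (\sum_(k in A) n k)).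
Proof.
move=> a0 An np lm.
set N := \sum_(k in A) n k.
set RHS := - a * ln N + _.
have N0 : 0 < N by apply: psum_gt0.
set S := \sum_(k in A) expR (- a^-1 * l k).
pose T := \sum_(k in A) expR (- a^-1 * m k).
have T0 : 0 < T by apply: psum_gt0 => // k _; exact: expR_gt0.
have S0 : 0 < S by apply: psum_gt0 => // k _; exact: expR_gt0.
have ai : 0 < a^-1 by rewrite invr_gt0.
have st : forall k, k \in A -> expR (- a^-1 * m k) <= expR (- a^-1 * l k).
  move=> k kA; rewrite ler_expR; have := lm k kA; nra.
have TS : T <= S by apply: ler_sum.
pose p k := n k / N.
pose x k := expR (- a^-1 * m k) / n k.
have pp : forall k, k \in A -> 0 < p k by move=> k kA; rewrite divr_gt0 ?np.
have p1 : \sum_(k in A) p k = 1 by rewrite -mulr_suml mulfV ?gt_eqF.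
have xp : forall k, k \in A -> 0 < x k by move=> k kA; rewrite divr_gt0 ?np ?expR_gt0.
have [amle ameq] := amgm pp p1 xp.
have px : \sum_(k in A) p k * x k = T / N.
  rewrite /T mulr_suml; apply: eq_bigr => k kA; rewrite /p /x.
  have := np k kA => nk; field; rewrite ?gt_eqF //.
pose Q := \sum_(k in A) p k * (- a^-1 * m k - ln (n k)).
have plx : \sum_(k in A) p k * ln (x k) = Q.
  apply: eq_bigr => k kA; rewrite /x ln_div ?posrE ?expR_gt0 ?np // expRK.
  by [].
have RQ : RHS = - a * (ln N + Q).
  rewrite /RHS /Q mulrDr; congr (_ + _); rewrite mulr_sumr; apply: eq_bigr => k kA.
  rewrite /p; field; rewrite ?gt_eqF //.
rewrite px plx ln_div ?posrE // in amle ameq.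
have lTS : ln T <= ln S by rewrite ler_ln ?posrE.
split.
  rewrite RQ; nra.
rewrite RQ => e.
have e1 : ln S = ln N + Q.
  apply: (mulfI (x := - a)); first by rewrite oppr_eq0 gt_eqF.
  exact: e.
have e2 : ln T = ln S by lra.
have e3 : Q = ln T - ln N by lra.
have TSeq : T = S by apply: ln_inj; rewrite ?posrE.
move=> k kA; split.
  have : expR (- a^-1 * l k) - expR (- a^-1 * m k) = 0.
    apply: (@psumr_eq0P _ _ (fun k => k \in A) (fun k => expR (- a^-1 * l k) - expR (- a^-1 * m k))) => //.
      by move=> i iA; rewrite subr_ge0 st.
    by rewrite sumrB -/S -/T TSeq subrr.
  have na : - a^-1 != 0 by rewrite oppr_eq0 gt_eqF.
  by move/eqP; rewrite subr_eq0 => /eqP /expR_inj /(mulfI na).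
have xk := ameq e3 k kA.
have : ln (x k) = Q by rewrite xk ln_div ?posrE // e3.
rewrite /x ln_div ?posrE ?expR_gt0 ?np // expRK => h.
have : a * (- a^-1 * m k - ln (n k)) = a * Q by rewrite h.
rewrite mulrDr mulrN mulrA mulrN mulfV ?gt_eqF // mulN1r; lra.
Qed.

Lemma step_eq (I : finType) (A : {set I}) (n l : I -> R) (a C : R) :
  0 < a -> A != finset.set0 -> (forall k, k \in A -> 0 < n k) ->
  (forall k, k \in A -> l k + a * ln (n k) = C) ->
  - a * ln (\sum_(k in A) expR (- a^-1 * l k)) = C - a * ln (\sum_(k in A) n k).
Proof.
move=> a0 An np hl.
have N0 : 0 < \sum_(k in A) n k by apply: psum_gt0.
have -> : \sum_(k in A) expR (- a^-1 * l k) = expR (- a^-1 * C) * \sum_(k in A) n k.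
  rewrite mulr_sumr; apply: eq_bigr => k kA.
  have -> : - a^-1 * l k = - a^-1 * C + ln (n k).
    rewrite -(hl k kA); field; rewrite gt_eqF //.
  by rewrite expRD lnK ?posrE ?np.
rewrite lnM ?posrE ?expR_gt0 // expRK; field; rewrite gt_eqF //.
Qed.


Lemma ln_injP (x y : R) : 0 < x -> 0 < y -> ln x = ln y -> x = y.
Proof. by move=> x0 y0 e; apply: ln_inj => //; rewrite posrE. Qed.

End Real.

Section Main.
Variables (R : realType) (V : finType) (r : V) (pa : V -> V)
    (alpha : V -> R) (Lam : V -> (V -> R) -> R) (lam : V -> R).
Hypothesis tree : is_rooted_tree r pa.
Hypothesis apos : forall v, internal r pa v -> 0 < alpha v.
Hypothesis Lleaf : forall v (x : V -> R), (forall i, 0 < x i) -> leaf r pa v -> Lam v x = x v.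
Hypothesis Lint : forall v (x : V -> R), (forall i, 0 < x i) -> internal r pa v ->
     Lam v x = (\sum_(w in ch r pa v) Lam w x `^ (- (alpha v)^-1)) `^ (- alpha v).
Hypothesis lleaf : forall v, leaf r pa v -> lam v = 1.
Hypothesis lint : forall v, internal r pa v ->
     lam v = dd R r pa v `^ (- alpha v) *
             \prod_(w in ch r pa v)
                (dd R r pa w `^ alpha v * lam w) `^ (dd R r pa w / dd R r pa v).

Local Notation d := (dd R r pa).
Definition D v := ln (d v).
Definition L v := ln (lam v).
Definition lnB v j := L v + alpha v * D v +
  \sum_(w in anc pa v j) (alpha w - alpha (pa w)) * D w.
Definition lnGM v (b : V -> R) := (\sum_(j in leaves r pa v) ln (b j)) / d v.

Lemma d_leaf {v} : leaf r pa v -> d v = 1.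
Proof. by move=> lv; rewrite /dd le_leaf // cards1. Qed.

Lemma d_int {v} : internal r pa v -> d v = \sum_(k in ch r pa v) d k.
Proof.
move=> iv; rewrite /dd -sumr_const (sum_le_int tree) //.
by apply: eq_bigr => k _; rewrite sumr_const.
Qed.

Lemma d_ge1 v : 1 <= d v.
Proof.
have [j jl] := leaves_nonempty tree v.
rewrite /dd ler1n; apply/card_gt0P; by exists j.
Qed.

Lemma d_gt0 v : 0 < d v.
Proof. exact: lt_le_trans ltr01 (d_ge1 v). Qed.

Lemma D_leaf {v} : leaf r pa v -> D v = 0.
Proof. by move=> lv; rewrite /D d_leaf // ln1. Qed.

Lemma L_leaf {v} : leaf r pa v -> L v = 0.
Proof. by move=> lv; rewrite /L lleaf // ln1. Qed.

Lemma lam_gt0 v : 0 < lam v.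
Proof.
elim/(tree_ind tree): v => v IH.
case: (boolP (leaf r pa v)) => lv; first by rewrite lleaf.
rewrite lint //; apply: mulr_gt0; first exact: powR_gt0 (d_gt0 v).
apply: prod_gt0 => k kc; apply: powR_gt0; apply: mulr_gt0; last exact: IH.
exact: powR_gt0 (d_gt0 k).
Qed.

Lemma Lam_gt0 v b : (forall i, 0 < b i) -> 0 < Lam v b.
Proof.
move=> bp; elim/(tree_ind tree): v => v IH.
case: (boolP (leaf r pa v)) => lv; first by rewrite Lleaf.
rewrite Lint //; apply: powR_gt0; apply: psum_gt0; first exact: internal_ch.
by move=> k kc; apply: powR_gt0; exact: IH.
Qed.

Lemma Lrec {v} : internal r pa v ->
  L v = - alpha v * D v + \sum_(k in ch r pa v) (d k / d v) * (alpha v * D k + L k).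
Proof.
move=> iv; rewrite /L (lint v iv) lnM ?posrE; last 2 first.
- exact: powR_gt0 (d_gt0 v).
- apply: prod_gt0 => k kc; apply: powR_gt0; apply: mulr_gt0; last exact: lam_gt0.
  exact: powR_gt0 (d_gt0 k).
rewrite ln_powR ln_prod; last first.
  move=> k kc; apply: powR_gt0; apply: mulr_gt0; last exact: lam_gt0.
  exact: powR_gt0 (d_gt0 k).
congr (_ + _); apply: eq_bigr => k kc.
rewrite ln_powR lnM ?posrE ?lam_gt0 ?powR_gt0 ?d_gt0 // ln_powR.
by [].
Qed.

Lemma KEY {v k j} : internal r pa v -> k \in ch r pa v -> j \in leaves r pa k ->
  lnB v j = lnB k j + L v + alpha v * D v - L k - alpha v * D k.
Proof.
move=> iv kc jl; rewrite /lnB.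
case: (boolP (leaf r pa k)) => lk.
  have [jk ae] := anc_leaf tree kc lk jl; subst j.
  rewrite ae (anc_self tree) !big_set0 (L_leaf lk) (D_leaf lk); ring.
rewrite (anc_int tree kc lk jl) big_setU1 /=; last first.
  by rewrite inE eqxx /= !andbF.
have [pk _] := ch_pa kc; rewrite pk; ring.
Qed.


Lemma main v b : (forall i, 0 < b i) ->
  [/\ ln (Lam v b) <= L v + lnGM v b,
      ln (Lam v b) = L v + lnGM v b ->
        forall j, j \in leaves r pa v -> ln (b j) = lnGM v b + lnB v j
    & forall c, (forall j, j \in leaves r pa v -> ln (b j) = c + lnB v j) ->
        ln (Lam v b) = c + L v].
Proof.
move=> bp; elim/(tree_ind tree): v => v IH.
case: (boolP (leaf r pa v)) => lv.
  have GM : lnGM v b = ln (b v) by rewrite /lnGM le_leaf // big_set1 (d_leaf lv) divr1.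
  have B0 : lnB v v = 0.
    by rewrite /lnB (anc_self tree) big_set0 (L_leaf lv) (D_leaf lv); ring.
  rewrite Lleaf // (L_leaf lv) GM add0r; split => //.
    by move=> _ j; rewrite le_leaf // inE => /eqP ->; rewrite B0 addr0.
  by move=> c h; rewrite h ?B0 ?addr0 // le_leaf // inE.
have a0 := apos v lv.
have An := internal_ch lv.
pose l k := ln (Lam k b).
pose m k := L k + lnGM k b.
have eqLv : ln (Lam v b) = - alpha v * ln (\sum_(k in ch r pa v) expR (- (alpha v)^-1 * l k)).
  rewrite Lint // ln_powR; congr (_ * ln _); apply: eq_bigr => k _.
  by rewrite powR_exp //; exact: Lam_gt0.
have dv := d_int lv.
have RHSeq : - alpha v * ln (\sum_(k in ch r pa v) d k) +
   \sum_(k in ch r pa v) (d k / \sum_(k in ch r pa v) d k) * (m k + alpha v * ln (d k))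
   = L v + lnGM v b.
  rewrite -dv (Lrec lv) /lnGM (sum_le_int tree _ _ _ lv) mulr_suml.
  rewrite -addrA; congr (_ + _).
  rewrite -big_split; apply: eq_bigr => k kc /=; rewrite /m /lnGM /D.
  have := d_gt0 k; have := d_gt0 v => h1 h2.
  field; rewrite ?gt_eqF //.
have lm : forall k, k \in ch r pa v -> l k <= m k by move=> k kc; case: (IH k kc).
have [le eqc] := @step R _ _ d l m _ a0 An (fun k _ => d_gt0 k) lm.
rewrite RHSeq -dv in le eqc.
split.
- by rewrite eqLv.
- move=> e j jl.
  have eqc' := eqc (esym (etrans (esym e) eqLv)).
  move: (jl); rewrite inE => /andP [lj dvj].
  have jv : j != v by apply/eqP => ej; move: lv; rewrite /internal -ej lj.
  have [k kc dkj] := child_step tree dvj jv.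
  have jlk : j \in leaves r pa k by rewrite inE lj dkj.
  have [lkm mk] := eqc' k kc.
  have [_ IH2 _] := IH k kc.
  have := IH2 lkm j jlk.
  rewrite (KEY lv kc jlk); move: mk; rewrite /m /D; lra.
- move=> c h.
  have hk : forall k, k \in ch r pa v -> l k + alpha v * ln (d k) = c + L v + alpha v * ln (d v).
    move=> k kc; have [_ _ IH3] := IH k kc.
    have := IH3 (c + L v + alpha v * D v - L k - alpha v * D k).
    have prem : forall j, j \in leaves r pa k ->
        ln (b j) = c + L v + alpha v * D v - L k - alpha v * D k + lnB k j.
      move=> j jl; rewrite h; last first.
        by move: jl; rewrite !inE => /andP [-> d]; exact: desc_ch kc d.
      rewrite (KEY lv kc jl); ring.
    move=> /(_ prem); rewrite /l => ->; rewrite /D; ring.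
  rewrite eqLv (@step_eq R _ _ d l _ _ a0 An (fun k _ => d_gt0 k) hk) -dv /D; ring.
Qed.

Lemma sumB v : \sum_(j in leaves r pa v) lnB v j = 0.
Proof.
elim/(tree_ind tree): v => v IH.
case: (boolP (leaf r pa v)) => lv.
  rewrite le_leaf // big_set1 /lnB (anc_self tree) big_set0 (L_leaf lv) (D_leaf lv); ring.
rewrite (sum_le_int tree _ _ _ lv).
pose X := L v + alpha v * D v.
pose Y k := alpha v * D k + L k.
transitivity (\sum_(k in ch r pa v) d k * (X - Y k)).
  apply: eq_bigr => k kc.
  rewrite (eq_bigr (fun j => lnB k j + (X - Y k))); last first.
    move=> j jl; rewrite (KEY lv kc jl) /X /Y; ring.
  by rewrite big_split /= IH // add0r sumr_const -mulr_natl; congr (_ * _).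
have e1 : d v * \sum_(k in ch r pa v) (d k / d v) * Y k = \sum_(k in ch r pa v) d k * Y k.
  rewrite mulr_sumr; apply: eq_bigr => k _; have := d_gt0 v => h; field; rewrite gt_eqF //.
have e2 : d v * X = \sum_(k in ch r pa v) d k * X by rewrite (d_int lv) mulr_suml.
transitivity ((\sum_(k in ch r pa v) d k * X) - \sum_(k in ch r pa v) d k * Y k).
  by rewrite -sumrB; apply: eq_bigr => k _; ring.
rewrite -e2 -e1 /X (Lrec lv) /Y; ring.
Qed.

Lemma Q2 v : d v * (L v + alpha v * D v) =
  \sum_(w in Iv r pa v :\ v) (alpha (pa w) - alpha w) * d w * D w.
Proof.
elim/(tree_ind tree): v => v IH.
case: (boolP (leaf r pa v)) => lv.
  rewrite (L_leaf lv) (D_leaf lv) (Iv_leaf tree _ lv) big1; first ring.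
  by move=> w; rewrite !inE andbF.
have hk : forall k, k \in ch r pa v ->
    \sum_(u in Iv r pa k) (alpha (pa u) - alpha u) * d u * D u = d k * (alpha v * D k + L k).
  move=> k kc; case: (boolP (leaf r pa k)) => lk.
    rewrite (Iv_leaf tree _ lk) big_set0 (L_leaf lk) (D_leaf lk); ring.
  rewrite (big_setD1 k) ?Iv_in //= -IH //.
  have [pk _] := ch_pa kc; rewrite pk; ring.
rewrite (sum_Iv tree) (eq_bigr _ hk).
suff -> : L v + alpha v * D v = \sum_(k in ch r pa v) (d k / d v) * (alpha v * D k + L k).
  rewrite mulr_sumr; apply: eq_bigr => k _; have := d_gt0 v => h; field; rewrite gt_eqF //.
rewrite [in LHS](Lrec lv); ring.
Qed.


Local Open Scope classical_set_scope.

Lemma main_result v : internal r pa v ->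
  [/\ sup [set Lam v b | b in Sv R r pa v] = lam v,
      lam v = d v `^ (- alpha v) *
              \prod_(w in Iv r pa v :\ v)
                 d w `^ ((alpha (pa w) - alpha w) * d w / d v)
    & exists2 bs : V -> R, bs \in Sv R r pa v &
        [/\ forall b, b \in Sv R r pa v -> Lam v b <= Lam v bs,
            forall b', b' \in Sv R r pa v ->
              (forall b, b \in Sv R r pa v -> Lam v b <= Lam v b') ->
              forall j, j \in leaves r pa v -> b' j = bs j
          & forall j, j \in leaves r pa v ->
              bs j = lam v * d v `^ alpha v *
                     \prod_(w in anc pa v j)
                        d w `^ (alpha w - alpha (pa w))]].
Proof.
move=> iv.
pose F j := lam v * d v `^ alpha v *
            \prod_(w in anc pa v j) d w `^ (alpha w - alpha (pa w)).
have Fp : forall j, 0 < F j.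
  move=> j; apply: mulr_gt0; first by apply: mulr_gt0; [exact: lam_gt0 | exact: powR_gt0 (d_gt0 v)].
  by apply: prod_gt0 => w _; exact: powR_gt0 (d_gt0 w).
have lnF : forall j, ln (F j) = lnB v j.
  move=> j; rewrite /F lnM ?posrE; last 2 first.
  - by apply: mulr_gt0; [exact: lam_gt0 | exact: powR_gt0 (d_gt0 v)].
  - by apply: prod_gt0 => w _; exact: powR_gt0 (d_gt0 w).
  rewrite lnM ?posrE ?lam_gt0 ?powR_gt0 ?d_gt0 // ln_powR ln_prod; last first.
    by move=> w _; exact: powR_gt0 (d_gt0 w).
  rewrite /lnB /L /D; congr (_ + _); apply: eq_bigr => w _; by rewrite ln_powR.
pose bs j := if j \in leaves r pa v then F j else 1.
have bsp : forall i, 0 < bs i by move=> i; rewrite /bs; case: ifP.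
have lnbs : forall j, j \in leaves r pa v -> ln (bs j) = lnB v j.
  by move=> j jl; rewrite /bs jl lnF.
have GMS : forall b, (forall i, 0 < b i) -> \prod_(i in leaves r pa v) b i = 1 -> lnGM v b = 0.
  move=> b bp p1; rewrite /lnGM -ln_prod; last by move=> i _; exact: bp.
  by rewrite p1 ln1 mul0r.
have bsS : bs \in Sv R r pa v.
  rewrite in_setE; split => //.
  have h : ln (\prod_(i in leaves r pa v) bs i) = 0.
    rewrite ln_prod; last by move=> i _; exact: bsp.
    by rewrite (eq_bigr _ lnbs) sumB.
  apply: ln_injP; [by apply: prod_gt0 => i _; exact: bsp | exact: ltr01 | by rewrite h ln1].
have Lbs : Lam v bs = lam v.
  apply: ln_injP; [exact: Lam_gt0 | exact: lam_gt0 |].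
  have [_ _ h3] := main v _ bsp.
  by rewrite (h3 0) ?add0r // => j jl; rewrite lnbs // add0r.
have ub : forall b, b \in Sv R r pa v -> Lam v b <= lam v.
  move=> b; rewrite in_setE => -[bp p1].
  have [h1 _ _] := main v _ bp; rewrite GMS // addr0 in h1.
  by rewrite -ler_ln ?posrE ?Lam_gt0 ?lam_gt0.
have bsS' : Sv R r pa v bs by rewrite -in_setE.
split.
- apply/eqP; rewrite eq_le; apply/andP; split.
    apply: ge_sup; first by exists (Lam v bs); exists bs.
    by move=> y [b bS <-]; apply: ub; rewrite in_setE.
  rewrite -{1}Lbs; apply: ub_le_sup; last by exists bs.
  by exists (lam v) => y [b bS <-]; apply: ub; rewrite in_setE.
- apply: ln_injP; first exact: lam_gt0.
    apply: mulr_gt0; first exact: powR_gt0 (d_gt0 v).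
    by apply: prod_gt0 => w _; exact: powR_gt0 (d_gt0 w).
  rewrite lnM ?posrE; last 2 first.
  - exact: powR_gt0 (d_gt0 v).
  - by apply: prod_gt0 => w _; exact: powR_gt0 (d_gt0 w).
  rewrite ln_powR ln_prod; last by move=> w _; exact: powR_gt0 (d_gt0 w).
  have q := Q2 v.
  rewrite (_ : \sum_(w in Iv r pa v :\ v) _ =
     (\sum_(w in Iv r pa v :\ v) (alpha (pa w) - alpha w) * d w * D w) / d v); last first.
    rewrite mulr_suml; apply: eq_bigr => w _; rewrite ln_powR /D.
    have := d_gt0 v => h; field; rewrite gt_eqF //.
  rewrite -q; have := d_gt0 v => h; rewrite /L /D; field; rewrite gt_eqF //.
- exists bs => //; split.
  + by move=> b bS; rewrite Lbs; exact: ub.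
  + move=> b' bS' hmax j jl.
    have ge := hmax bs bsS; rewrite Lbs in ge.
    have le := ub b' bS'.
    move: (bS'); rewrite in_setE => -[bp p1].
    have [_ h2 _] := main v _ bp.
    have e : ln (Lam v b') = L v + lnGM v b'.
      by rewrite GMS // addr0 /L; congr ln; apply/eqP; rewrite eq_le le ge.
    apply: ln_injP; [exact: bp | exact: bsp |].
    by rewrite (h2 e j jl) lnbs // GMS // add0r.
  + by move=> j jl; rewrite /bs jl.
Qed.

End Main.

Local Open Scope classical_set_scope.
Theorem theorem4p6 (R : realType) (V : finType) (r : V) (pa : V -> V)
    (alpha : V -> R) (Lam : V -> (V -> R) -> R) (lam : V -> R) :
  is_rooted_tree r pa ->
  (forall v, internal r pa v -> 0 < alpha v) ->
  (* tail copulas Lambda_v, given recursively *)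
  (forall v (x : V -> R), (forall i, 0 < x i) -> leaf r pa v -> Lam v x = x v) ->
  (forall v (x : V -> R), (forall i, 0 < x i) -> internal r pa v ->
     Lam v x = (\sum_(w in ch r pa v) Lam w x `^ (- (alpha v)^-1)) `^ (- alpha v)) ->
  (* lambda*_v, given recursively *)
  (forall v, leaf r pa v -> lam v = 1) ->
  (forall v, internal r pa v ->
     lam v = dd R r pa v `^ (- alpha v) *
             \prod_(w in ch r pa v)
                (dd R r pa w `^ alpha v * lam w) `^ (dd R r pa w / dd R r pa v)) ->
  forall v, internal r pa v ->
  [/\ (* (i) the MTCM of C_v equals lambda*_v *)
      sup [set Lam v b | b in Sv R r pa v] = lam v,
      (* (ii) closed form *)
      lam v = dd R r pa v `^ (- alpha v) *
              \prod_(w in Iv r pa v :\ v)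
                 dd R r pa w `^ ((alpha (pa w) - alpha w) * dd R r pa w / dd R r pa v)
    & (* (iii) the maximizer exists, is unique (on le(v)), and is given by *)
      exists2 bs : V -> R, bs \in Sv R r pa v &
        [/\ forall b, b \in Sv R r pa v -> Lam v b <= Lam v bs,
            forall b', b' \in Sv R r pa v ->
              (forall b, b \in Sv R r pa v -> Lam v b <= Lam v b') ->
              forall j, j \in leaves r pa v -> b' j = bs j
          & forall j, j \in leaves r pa v ->
              bs j = lam v * dd R r pa v `^ alpha v *
                     \prod_(w in anc pa v j)
                        dd R r pa w `^ (alpha w - alpha (pa w))]].
Proof.
move=> tree apos Lleaf Lint lleaf lint v iv.
by apply: main_result.
Qed.
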